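(* Suppose there exists a subspace $\mathcal C\subseteq V$ of dimension $K$ with orthogonal projector $P$ that detects every error in $\mathcal E_\xi$ for each $\xi$ in a prescribed set $\mathcal S$ of sector labels. Then there exist real numbers $\{A_\xi\}_\xi,\{B_\xi\}_\xi$ (indexed by all sectors) satisfying $A_\xi\ge0$ for all $\xi$; $A_\xi\le K B_\xi$ for all $\xi$; $\sum_\xi A_\xi=K$; $\sum_\xi B_\xi=K^2$; $B_\xi=\sum_\rho M_{\xi\rho}A_\rho$ for all $\xi$; and $A_\xi=KB_\xi$ for all $\xi\in\mathcal S$. Namely one may take $A_\xi=A_\xi(P,P)$, $B_\xi=B_\xi(P,P)$. In particular, if this linear system has no solution, no $K$-dimensional subspace of $V$ detects all errors in the sectors $\mathcal E_\xi$, $\xi\in\mathcal S$.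
   Context: Let $G$ be a group and $V$ a finite-dimensional complex Hilbert space carrying a unitary representation $\rho$ of $G$; $G$ acts on $\mathcal L(V)$ by conjugation $g\cdot X=\rho(g)X\rho(g)^\dagger$, unitary for the Hilbert–Schmidt inner product $\langle X_1,X_2\rangle=\mathrm{Tr}(X_1^\dagger X_2)$. Assume multiplicity-freeness: $\mathcal L(V)=\bigoplus_\xi\mathcal E_\xi$, a finite orthogonal direct sum of nonzero, pairwise non-isomorphic irreducible $G$-subrepresentations; $d_\xi=\dim\mathcal E_\xi$. Let $\Pi_\xi$ be the orthogonal projector onto $\mathcal E_\xi$, $\mathcal B_\xi$ an orthonormal basis of $\mathcal E_\xi$, $\mathrm{Twirl}_\xi(X)=\sum_{E\in\mathcal B_\xi}E^\dagger XE$, $A_\xi(X_1,X_2)=\langle X_1,\Pi_\xi(X_2)\rangle$, $B_\xi(X_1,X_2)=\langle X_1,\mathrm{Twirl}_\xi(X_2)\rangle$. With $\langle\!\langle\mathcal S,\mathcal T\rangle\!\rangle=\mathrm{Tr}(\mathcal S^\dagger\mathcal T)$ on superoperators, the unnormalized MacWilliams matrix is $M_{\xi\rho}=\frac{1}{d_\rho}\langle\!\langle\Pi_\rho,\mathrm{Twirl}_\xi\rangle\!\rangle$ (equivalently $\sqrt{d_\xi/d_\rho}\,U_{\xi\rho}$ with $U_{\xi\rho}=\langle\!\langle d_\rho^{-1/2}\Pi_\rho,d_\xi^{-1/2}\mathrm{Twirl}_\xi\rangle\!\rangle$). A subspace $\mathcal C\subseteq V$ with orthogonal projector $P$ detects every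 error in $\mathcal F\subseteq\mathcal L(V)$ if for every $E\in\mathcal F$ there is $c_E\in\mathbb C$ with $PEP=c_EP$. *)

(* Defs.v *)
From HB Require Import structures.
From mathcomp Require Import all_boot all_order all_algebra.
From mathcomp Require Import reals.
From mathcomp Require Import complex.

Set Implicit Arguments.
Unset Strict Implicit.
Unset Printing Implicit Defensive.

Import Order.TTheory GRing.Theory Num.Theory.
Local Open Scope ring_scope.

(* Matrix / Hilbert-Schmidt conventions on L(V) = 'M[C]_n, V = C^n.          *)
Section HS.
Variables (C : numClosedFieldType) (n : nat).

Definition adjM (X : 'M[C]_n) : 'M[C]_n := (map_mx Num.conj X)^T.

Definition hs (X Y : 'M[C]_n) : C := \tr (adjM X *m Y).

Definition conj_act (U X : 'M[C]_n) : 'M[C]_n := U *m X *m adjM U.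

Definition G_invariant (G : Type) (rho : G -> 'M[C]_n) (W : {vspace 'M[C]_n}) :=
  forall (g : G) (X : 'M[C]_n), X \in W -> conj_act (rho g) X \in W.

Definition G_irreducible (G : Type) (rho : G -> 'M[C]_n) (W : {vspace 'M[C]_n}) :=
  [/\ W != 0%VS, G_invariant rho W &
      forall U : {vspace 'M[C]_n}, (U <= W)%VS -> G_invariant rho U ->
        U = 0%VS \/ U = W].

Definition G_isomorphic (G : Type) (rho : G -> 'M[C]_n)
    (W1 W2 : {vspace 'M[C]_n}) :=
  exists f : 'M[C]_n -> 'M[C]_n,
    [/\ forall (a : C) (X Y : 'M[C]_n), f (a *: X + Y) = a *: f X + f Y,
        forall X, X \in W1 -> f X \in W2,
        {in W1 &, injective f},
        forall Y, Y \in W2 -> exists2 X, X \in W1 & f X = Y &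
        forall (g : G) X, X \in W1 -> f (conj_act (rho g) X) = conj_act (rho g) (f X)].

Definition orthonormal_basis (W : {vspace 'M[C]_n}) (b : seq 'M[C]_n) :=
  basis_of W b /\
  forall i j, (i < size b)%N -> (j < size b)%N ->
    hs b`_i b`_j = (i == j)%:R.

(* orthogonal projector onto span b, for b an orthonormal family *)
Definition Proj (b : seq 'M[C]_n) (X : 'M[C]_n) : 'M[C]_n :=
  \sum_(E <- b) hs E X *: E.

Definition Twirl (b : seq 'M[C]_n) (X : 'M[C]_n) : 'M[C]_n :=
  \sum_(E <- b) adjM E *m X *m E.

Definition Aform (b : seq 'M[C]_n) (X1 X2 : 'M[C]_n) : C := hs X1 (Proj b X2).
Definition Bform (b : seq 'M[C]_n) (X1 X2 : 'M[C]_n) : C := hs X1 (Twirl b X2).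

(* <<S, T>> = Tr(S^dagger T) on superoperators, computed in the orthonormal
   basis of matrix units of L(V) *)
Definition superdot (S T : 'M[C]_n -> 'M[C]_n) : C :=
  \sum_(i < n) \sum_(j < n) hs (S (delta_mx i j)) (T (delta_mx i j)).

Definition MacW (I : Type) (E : I -> {vspace 'M[C]_n}) (bs : I -> seq 'M[C]_n)
    (xi r : I) : C :=
  (\dim (E r))%:R^-1 * superdot (Proj (bs r)) (Twirl (bs xi)).

End HS.

(* Main.v *)
Require Import Defs.
From HB Require Import structures.
From mathcomp Require Import all_boot all_order all_algebra.
From mathcomp Require Import reals.
From mathcomp Require Import complex.
From mathcomp Require Import ring lra.
Import Order.TTheory GRing.Theory Num.Theory.
Local Open Scope ring_scope.

Set Implicit Arguments.
Unset Strict Implicit.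
Unset Printing Implicit Defensive.
Import Order.TTheory GRing.Theory Num.Theory.
Local Open Scope ring_scope.

Section Gen.
Variables (C : numClosedFieldType) (n : nat).
Local Notation M := ('M[C]_n).
Implicit Types (X Y Z A B U : M) (b : seq M).

Lemma adjME A i j : adjM A i j = (A j i)^*.
Proof. by rewrite /adjM !mxE. Qed.

Lemma hsE X Y : hs X Y = \sum_i \sum_j (X j i)^* * Y j i.
Proof.
rewrite /hs /mxtrace; apply: eq_bigr => i _; rewrite mxE.
by apply: eq_bigr => j _; rewrite adjME.
Qed.

Lemma hs_conj X Y : hs Y X = (hs X Y)^*.
Proof.
rewrite !hsE rmorph_sum; apply: eq_bigr => i _; rewrite rmorph_sum.
by apply: eq_bigr => j _; rewrite rmorphM /= conjCK mulrC.
Qed.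

Lemma hs_sumr I (r : seq I) (P : pred I) (F : I -> M) X :
  hs X (\sum_(i <- r | P i) F i) = \sum_(i <- r | P i) hs X (F i).
Proof. by rewrite /hs mulmx_sumr raddf_sum. Qed.

Lemma hs_addr X Y Z : hs X (Y + Z) = hs X Y + hs X Z.
Proof. by rewrite /hs mulmxDr raddfD. Qed.

Lemma hs_scaler a X Y : hs X (a *: Y) = a * hs X Y.
Proof. by rewrite /hs -scalemxAr linearZ. Qed.

Lemma hs_suml I (r : seq I) (P : pred I) (F : I -> M) X :
  hs (\sum_(i <- r | P i) F i) X = \sum_(i <- r | P i) hs (F i) X.
Proof.
rewrite hs_conj hs_sumr rmorph_sum /=; apply: eq_bigr => i _.
by rewrite -hs_conj.
Qed.

Lemma hs_addl X Y Z : hs (Y + Z) X = hs Y X + hs Z X.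
Proof. by rewrite hs_conj hs_addr rmorphD /= -!hs_conj. Qed.

Lemma hs_scalel a X Y : hs (a *: Y) X = a^* * hs Y X.
Proof. by rewrite hs_conj hs_scaler rmorphM /= -!hs_conj. Qed.

Lemma hs0r X : hs X 0 = 0.
Proof. by rewrite /hs mulmx0 linear0. Qed.

Lemma hs0l X : hs 0 X = 0.
Proof. by rewrite hs_conj hs0r conjC0. Qed.

Lemma hs_subr X Y Z : hs X (Y - Z) = hs X Y - hs X Z.
Proof. by rewrite /hs mulmxBr raddfB. Qed.

Lemma hs_ge0 X : 0 <= hs X X.
Proof.
rewrite hsE; apply: sumr_ge0 => i _; apply: sumr_ge0 => j _.
by rewrite mulrC mul_conjC_ge0.
Qed.

Lemma hs_real X : (hs X X)^* = hs X X.
Proof. by rewrite -hs_conj. Qed.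

Lemma hs_eq0 X : hs X X = 0 -> X = 0.
Proof.
rewrite hsE => H; apply/matrixP => j i; rewrite mxE.
have Hge k : true -> 0 <= \sum_l (X l k)^* * X l k.
  by move=> _; apply: sumr_ge0 => l _; rewrite mulrC mul_conjC_ge0.
have Hi := @psumr_eq0P _ _ _ _ Hge H i isT.
have Hge2 l : true -> 0 <= (X l i)^* * X l i by move=> _; rewrite mulrC mul_conjC_ge0.
have /eqP := @psumr_eq0P _ _ _ _ Hge2 Hi j isT.
by rewrite mulrC mul_conjC_eq0 => /eqP.
Qed.

Lemma hs_subl X Y Z : hs (Y - Z) X = hs Y X - hs Z X.
Proof. by rewrite hs_conj hs_subr rmorphB /= -!hs_conj. Qed.

Lemma adjM_mul A B : adjM (A *m B) = adjM B *m adjM A.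
Proof. by rewrite /adjM map_mxM trmx_mul. Qed.

Lemma adjMK A : adjM (adjM A) = A.
Proof. by apply/matrixP => i j; rewrite !adjME conjCK. Qed.

Lemma adjMD A B : adjM (A + B) = adjM A + adjM B.
Proof. by apply/matrixP => i j; rewrite /adjM !mxE rmorphD. Qed.

Lemma adjMZ a A : adjM (a *: A) = a^* *: adjM A.
Proof. by apply/matrixP => i j; rewrite /adjM !mxE rmorphM. Qed.

Lemma adjM_sum I (r : seq I) (P : pred I) (F : I -> M) :
  adjM (\sum_(i <- r | P i) F i) = \sum_(i <- r | P i) adjM (F i).
Proof.
apply: (big_ind2 (fun x y => adjM x = y)) => //.
  by apply/matrixP => i j; rewrite /adjM !mxE conjC0.
by move=> x1 x2 y1 y2 <- <-; rewrite adjMD.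
Qed.

Lemma hs_mull A X Y : hs (A *m X) Y = hs X (adjM A *m Y).
Proof. by rewrite /hs adjM_mul mulmxA. Qed.

Lemma hs_mulr A X Y : hs (X *m A) Y = hs X (Y *m adjM A).
Proof. by rewrite /hs adjM_mul -mulmxA mxtrace_mulC mulmxA. Qed.

Lemma unitaryC U : adjM U *m U = 1%:M -> U *m adjM U = 1%:M.
Proof. exact: mulmx1C. Qed.

Lemma hs_conj_act U X Y : adjM U *m U = 1%:M ->
  hs (conj_act U X) (conj_act U Y) = hs X Y.
Proof.
move=> HU; rewrite /conj_act hs_mulr hs_mull adjMK.
by rewrite -!mulmxA HU mulmx1 !mulmxA HU mul1mx.
Qed.

Lemma CS X Y : hs X Y * (hs X Y)^* <= hs X X * hs Y Y.
Proof.
set a := hs X X; set s := hs X Y.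
have E : hs (a *: Y - s *: X) (a *: Y - s *: X) = a * (a * hs Y Y - s * s^*).
  rewrite !(hs_subl, hs_subr, hs_scalel, hs_scaler) hs_real -/a -/s.
  rewrite [hs Y X]hs_conj -/s; ring.
have H0 := hs_ge0 (a *: Y - s *: X); rewrite E in H0.
have [a0|a0] := eqVneq a 0.
  by have X0 := hs_eq0 a0; rewrite /s X0 hs0l mul0r /a X0 hs0l mul0r.
have ap : 0 < a by rewrite lt_def a0 hs_ge0.
by rewrite pmulr_rge0 // subr_ge0 in H0.
Qed.

Lemma hs_delta i j X : hs (delta_mx i j) X = X i j.
Proof.
rewrite hsE (bigD1 j) //= (bigD1 i) //= !mxE !eqxx /= conjC1 mul1r.
rewrite big1 ?addr0; last by move=> k /negbTE nk; rewrite mxE nk conjC0 mul0r.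
rewrite big1 ?addr0 // => k /negbTE nk; apply: big1 => l _.
by rewrite mxE nk andbF conjC0 mul0r.
Qed.

Lemma delta_expand X : X = \sum_i \sum_j hs (delta_mx i j) X *: delta_mx i j.
Proof.
rewrite {1}(matrix_sum_delta X); apply: eq_bigr => i _.
by apply: eq_bigr => j _; rewrite hs_delta.
Qed.

Lemma lin0 (L : M -> M) (hL : linear L) : L 0 = 0.
Proof.
have h := hL 1 0 0; rewrite !scale1r addr0 in h.
by symmetry; apply: (addrI (L 0)); rewrite addr0 -h.
Qed.

Lemma lin_sum (L : M -> M) (hL : linear L) I (r : seq I) (P : pred I) (F : I -> M) :
  L (\sum_(i <- r | P i) F i) = \sum_(i <- r | P i) L (F i).
Proof.
have L0 := lin0 hL.
elim: r => [|x r IH]; rewrite ?big_nil ?big_cons // -IH.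
by case: (P x) => //; rewrite -[F x]scale1r hL !scale1r.
Qed.

Lemma lin_scale (L : M -> M) (hL : linear L) a X : L (a *: X) = a *: L X.
Proof.
have L0 := lin0 hL.
by rewrite -[a *: X]addr0 hL L0 addr0.
Qed.

Section ONB.
Variables (W : {vspace M}) (b : seq M).
Hypothesis Hb : orthonormal_basis W b.

Lemma onb_mem F : F \in b -> F \in W.
Proof. by case: Hb => /andP[/eqP <- _] _ Fb; rewrite memv_span. Qed.

Lemma onb_nth i : (i < size b)%N -> b`_i \in W.
Proof. by move=> ib; apply: onb_mem; rewrite mem_nth. Qed.

Lemma Proj_nth X : Proj b X = \sum_(i < size b) hs b`_i X *: b`_i.
Proof. by rewrite /Proj (big_nth 0) big_mkord. Qed.

Lemma Proj_lin : linear (Proj b).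
Proof.
move=> a X Y; rewrite /Proj scaler_sumr -big_split /=; apply: eq_bigr => E _.
by rewrite hs_addr hs_scaler scalerDl scalerA.
Qed.

Lemma Proj_mem X : Proj b X \in W.
Proof. by rewrite /Proj big_seq; apply: memv_suml => E Eb; apply: memvZ; apply: onb_mem. Qed.

Lemma hs_nth_sum (c : 'I_(size b) -> C) (i : 'I_(size b)) :
  hs b`_i (\sum_(j < size b) c j *: b`_j) = c i.
Proof.
rewrite hs_sumr (bigD1 i) //= hs_scaler Hb.2 // eqxx mulr1 big1 ?addr0 //.
move=> j ji; rewrite hs_scaler Hb.2 //; case: eqP => [/val_inj ij|_].
  by rewrite ij eqxx in ji.
by rewrite mulr0.
Qed.

Lemma Proj_id Y : Y \in W -> Proj b Y = Y.
Proof.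
case: Hb => /andP[/eqP Wb _] _; rewrite -Wb => YW.
have := coord_span (X := in_tuple b) YW => /= YE.
rewrite Proj_nth {2}YE; apply: eq_bigr => i _; congr (_ *: _).
by rewrite {1}YE hs_nth_sum.
Qed.

Lemma Proj_orth Y : (forall F, F \in W -> hs F Y = 0) -> Proj b Y = 0.
Proof. by move=> H; rewrite /Proj big_seq big1 // => F Fb; rewrite H ?scale0r // onb_mem. Qed.

Lemma Proj_sa X Y : hs X (Proj b Y) = hs (Proj b X) Y.
Proof.
rewrite /Proj hs_sumr hs_suml; apply: eq_bigr => F _.
by rewrite hs_scaler hs_scalel -hs_conj mulrC.
Qed.

Lemma onb_size : \dim W = size b.
Proof. by case: Hb => Hb1 _; rewrite (size_basis (X := in_tuple b)). Qed.

End ONB.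

Section Decomp.
Variables (I : finType) (E : I -> {vspace M}) (bs : I -> seq M).
Hypothesis E_span : (\sum_(xi : I) E xi)%VS = fullv.
Hypothesis E_orth : forall xi r : I, xi != r -> forall X Y : M,
      X \in E xi -> Y \in E r -> hs X Y = 0.
Hypothesis bs_onb : forall xi : I, orthonormal_basis (E xi) (bs xi).

Local Notation Pi r := (Proj (bs r)).

Lemma Pi_zero r s Y : r != s -> Y \in E s -> Pi r Y = 0.
Proof. by move=> rs Ys; apply: (Proj_orth (bs_onb r)) => F Fr; apply: (E_orth rs). Qed.

Lemma Pi_sum r J (l : seq J) (P : pred J) (F : J -> M) :
  Pi r (\sum_(j <- l | P j) F j) = \sum_(j <- l | P j) Pi r (F j).
Proof. exact: (lin_sum (Proj_lin (bs r))). Qed.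

Lemma decomp X : X = \sum_r Pi r X.
Proof.
have : X \in (\sum_r E r)%VS by rewrite E_span memvf.
case/memv_sumP => Xs HXs XE.
have -> : X = \sum_r Xs r :> M by exact: XE.
apply: eq_bigr => r _; rewrite Pi_sum (bigD1 r) //=.
rewrite (Proj_id (bs_onb r)); last exact: HXs.
rewrite big1 ?addr0 // => s sr; rewrite (@Pi_zero r s) //; first by rewrite eq_sym.
exact: HXs.
Qed.

Lemma Pi_in r X : Pi r X \in E r.
Proof. exact: Proj_mem. Qed.

Lemma Pi_id r X : X \in E r -> Pi r X = X.
Proof. exact: Proj_id. Qed.

Lemma PiPi r s X : Pi r (Pi s X) = if r == s then Pi s X else 0.
Proof.
case: eqVneq => [->|rs]; first by rewrite Pi_id // Pi_in.
by rewrite (@Pi_zero r s) // Pi_in.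
Qed.

Lemma trace_indep (L : M -> M) (hL : linear L) :
  \sum_r \sum_(F <- bs r) hs F (L F) =
  \sum_i \sum_j hs (delta_mx i j) (L (delta_mx i j)).
Proof.
have step F : hs F (L F) =
    \sum_i \sum_j hs F (delta_mx i j) * hs (delta_mx i j) (L F).
  rewrite {1}(delta_expand (L F)) hs_sumr; apply: eq_bigr => i _.
  by rewrite hs_sumr; apply: eq_bigr => j _; rewrite hs_scaler mulrC.
under eq_bigr => r _ do under eq_bigr => F _ do rewrite step.
under eq_bigr => r _ do rewrite exchange_big /=.
rewrite exchange_big /=; apply: eq_bigr => i _.
under eq_bigr => r _ do rewrite exchange_big /=.
rewrite exchange_big /=; apply: eq_bigr => j _.
have -> : L (delta_mx i j) = L (\sum_r Pi r (delta_mx i j)) by rewrite -decomp.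
rewrite lin_sum // hs_sumr; apply: eq_bigr => r _.
rewrite /Proj lin_sum // hs_sumr; apply: eq_bigr => F _.
by rewrite lin_scale // hs_scaler.
Qed.

Lemma onb_hs_sum r : \sum_(F <- bs r) hs F F = (size (bs r))%:R.
Proof.
rewrite (big_nth 0) big_mkord (eq_bigr (fun _ => 1)).
  by rewrite sumr_const card_ord.
by move=> i _; rewrite (bs_onb r).2 // eqxx.
Qed.

Lemma trace_Pi r :
  \sum_i \sum_j hs (delta_mx i j) (Pi r (delta_mx i j)) = (\dim (E r))%:R.
Proof.
rewrite -trace_indep; last exact: Proj_lin.
rewrite (bigD1 r) //= [X in _ + X]big1 ?addr0.
  rewrite (onb_size (bs_onb r)) -onb_hs_sum.
  by apply: eq_big_seq => F Fb; rewrite Pi_id // (onb_mem (bs_onb r)).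
move=> s sr; rewrite big_seq big1 // => F Fb.
by rewrite (@Pi_zero r s) ?hs0r 1?eq_sym // (onb_mem (bs_onb s)).
Qed.


Lemma Twirl_nth b X : Twirl b X = \sum_(i < size b) adjM b`_i *m X *m b`_i.
Proof. by rewrite /Twirl (big_nth 0) big_mkord. Qed.

Lemma Twirl_lin b : linear (Twirl b).
Proof.
move=> a X Y; rewrite /Twirl scaler_sumr -big_split /=; apply: eq_bigr => F _.
by rewrite mulmxDr mulmxDl -scalemxAr -scalemxAl.
Qed.

Lemma conj_act_lin U : linear (conj_act U).
Proof.
by move=> a X Y; rewrite /conj_act mulmxDr mulmxDl -scalemxAr -scalemxAl.
Qed.

Lemma expand_twirl d (B : 'I_d -> M) (c : 'I_d -> 'I_d -> C) X :
  \sum_i adjM (\sum_j c i j *: B j) *m X *m (\sum_k c i k *: B k) =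
  \sum_j \sum_k (\sum_i (c i j)^* * c i k) *: (adjM (B j) *m X *m B k).
Proof.
have -> : \sum_i adjM (\sum_j c i j *: B j) *m X *m (\sum_k c i k *: B k) =
   \sum_i \sum_j \sum_k ((c i j)^* * c i k) *: (adjM (B j) *m X *m B k).
  apply: eq_bigr => i _; rewrite adjM_sum !mulmx_suml; apply: eq_bigr => j _.
  rewrite mulmx_sumr; apply: eq_bigr => k _.
  by rewrite adjMZ -!scalemxAl -scalemxAr scalerA.
rewrite exchange_big /=; apply: eq_bigr => j _.
rewrite exchange_big /=; apply: eq_bigr => k _.
by rewrite scaler_suml.
Qed.

Lemma Twirl_equiv (W : {vspace M}) b U X : orthonormal_basis W b ->
  adjM U *m U = 1%:M ->
  (forall Y, Y \in W -> conj_act U Y \in W) ->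
  (forall Y, Y \in W -> conj_act (adjM U) Y \in W) ->
  Twirl b (conj_act U X) = conj_act U (Twirl b X).
Proof.
move=> Hb HU inv1 inv2.
have HU' := unitaryC HU.
set d := size b.
pose B (i : 'I_d) := b`_i.
pose F i := conj_act (adjM U) (B i).
have BW i : B i \in W by apply: (onb_nth Hb).
have FE i : F i = \sum_(j < d) hs (B j) (F i) *: B j.
  by rewrite /F -{1}(Proj_id Hb (inv2 _ (BW i))) Proj_nth.
have c1 i j : (hs (B j) (F i))^* = hs (B i) (conj_act U (B j)).
  rewrite -hs_conj /F /conj_act adjMK hs_mulr hs_mull adjMK.
  by rewrite !mulmxA.
have key j k : \sum_(i < d) (hs (B j) (F i))^* * hs (B k) (F i) = (j == k)%:R.
  have -> : \sum_(i < d) (hs (B j) (F i))^* * hs (B k) (F i) =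
     hs (conj_act U (B k)) (Proj b (conj_act U (B j))).
    rewrite Proj_nth hs_sumr; apply: eq_bigr => i _.
    rewrite hs_scaler c1; congr (_ * _).
    by rewrite -[LHS]conjCK c1 -hs_conj.
  rewrite (Proj_id Hb (inv1 _ (BW j))) hs_conj_act // /B (Hb.2) //.
  by rewrite eq_sym.
have term i : adjM (B i) *m conj_act U X *m B i = conj_act U (adjM (F i) *m X *m F i).
  rewrite /F /conj_act !adjM_mul !adjMK.
  rewrite !mulmxA HU' mul1mx -!mulmxA HU' mulmx1.
  by rewrite !mulmxA.
rewrite !Twirl_nth; under eq_bigr => i _ do rewrite term.
rewrite -(lin_sum (conj_act_lin U)); congr (conj_act U _).
under eq_bigr => i _ do rewrite FE.
rewrite expand_twirl; apply: eq_bigr => j _.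
rewrite (bigD1 j) //= key eqxx scale1r big1 ?addr0 // => k kj.
by rewrite key eq_sym (negbTE kj) scale0r.
Qed.

Definition linpack (f : M -> M) (hf : linear f) : {linear M -> M} :=
  HB.pack f (GRing.isSemilinear.Build C M M _ f (GRing.semilinear_linear hf)).

Lemma lin_sub (L : M -> M) (hL : linear L) X Y : L (X - Y) = L X - L Y.
Proof. exact: (raddfB (linpack hL)). Qed.

Section Schur.
Variables (G : groupType) (rho : G -> M).
Hypothesis rho_mul : forall g h : G, rho (g * h)%g = rho g *m rho h.
Hypothesis rho_one : rho 1%g = 1%:M.
Hypothesis rho_unitary : forall g : G, adjM (rho g) *m rho g = 1%:M.
Hypothesis E_irr : forall xi, G_irreducible rho (E xi).
Hypothesis E_noniso : forall xi r, xi != r -> ~ G_isomorphic rho (E xi) (E r).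

Lemma rho_inv g : rho (g^-1)%g = adjM (rho g).
Proof.
have h : rho (g^-1)%g *m rho g = 1%:M by rewrite -rho_mul mulVg rho_one.
have HU' := unitaryC (rho_unitary g).
by rewrite -[LHS]mulmx1 -HU' mulmxA h mul1mx.
Qed.

Lemma E_inv r g X : X \in E r -> conj_act (rho g) X \in E r.
Proof. by case: (E_irr r) => _ Hinv _; apply: Hinv. Qed.

Lemma E_nz r : E r != 0%VS.
Proof. by case: (E_irr r). Qed.

Lemma conj_act0 U : conj_act U 0 = 0.
Proof. by rewrite /conj_act mulmx0 mul0mx. Qed.

Lemma Pi_equiv r g X : Pi r (conj_act (rho g) X) = conj_act (rho g) (Pi r X).
Proof.
rewrite {1}(decomp X) (lin_sum (conj_act_lin _)) Pi_sum (bigD1 r) //=.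
rewrite Pi_id ?E_inv ?Pi_in // big1 ?addr0 // => s sr.
by rewrite (@Pi_zero r s) 1?eq_sym // E_inv // Pi_in.
Qed.

Lemma Twirl_equiv_rho xi g X :
  Twirl (bs xi) (conj_act (rho g) X) = conj_act (rho g) (Twirl (bs xi) X).
Proof.
apply: (Twirl_equiv X (bs_onb xi) (rho_unitary g)) => Y HY; first exact: E_inv.
by rewrite -rho_inv E_inv.
Qed.

Section SchurT.
Variables (T : M -> M) (hT : linear T).
Hypothesis Teq : forall g X, T (conj_act (rho g) X) = conj_act (rho g) (T X).

Lemma Schur1 r s X : r != s -> X \in E r -> Pi s (T X) = 0.
Proof.
move=> rs Xr.
pose f Y := Pi s (T Y).
have hf : linear f by move=> c Y Z; rewrite /f hT Proj_lin.
have feq g Y : f (conj_act (rho g) Y) = conj_act (rho g) (f Y).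
  by rewrite /f Teq Pi_equiv.
pose h := linfun (linpack hf).
have hE Y : h Y = f Y by rewrite lfunE.
pose K := (E r :&: lker h)%VS.
have memK Y : (Y \in K) = (Y \in E r) && (f Y == 0).
  by rewrite memv_cap memv_ker hE.
have invK : G_invariant rho K.
  move=> g Y; rewrite !memK => /andP[Yr /eqP fY].
  by rewrite E_inv // feq fY conj_act0 eqxx.
have [_ _ irr] := E_irr r.
case: (irr K (capvSl _ _) invK) => HK; last first.
  by have := Xr; rewrite -HK memK => /andP[_ /eqP].
pose U2 := (h @: E r)%VS.
have U2s : (U2 <= E s)%VS.
  by apply/subvP => Y /memv_imgP [Z Zr ->]; rewrite hE; apply: Pi_in.
have invU2 : G_invariant rho U2.
  move=> g Y /memv_imgP [Z Zr ->]; rewrite hE -feq -hE.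
  by apply: memv_img; apply: E_inv.
have [_ _ irr2] := E_irr s.
case: (irr2 U2 U2s invU2) => HU2.
  exfalso; have := memv_pick (E r); set X0 := vpick (E r) => X0r.
  have : X0 \in K.
    rewrite memK X0r /=; have := memv_img h X0r.
    by rewrite -/U2 HU2 memv0 hE.
  rewrite HK memv0 /X0 vpick0; apply/negP; exact: E_nz.
exfalso; apply: (E_noniso rs); exists f; split.
- by move=> c Y Z; rewrite hf.
- by move=> Y _; apply: Pi_in.
- move=> Y Z Yr Zr fYZ; apply/eqP; rewrite -subr_eq0.
  have : Y - Z \in K by rewrite memK memvB //= (lin_sub hf) fYZ subrr eqxx.
  by rewrite HK memv0.
- move=> Y; rewrite -HU2 => /memv_imgP [Z Zr ->]; exists Z => //.
- by move=> g Y _; apply: feq.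
Qed.

Lemma Schur2 r X : X \in E r -> T X \in E r.
Proof.
move=> Xr; rewrite (decomp (T X)) (bigD1 r) //= big1 ?addr0 ?Pi_in // => s sr.
by apply: (Schur1 _ Xr); rewrite eq_sym.
Qed.

Lemma Schur3 r : exists a, forall X, X \in E r -> T X = a *: X.
Proof.
have Hb := bs_onb r.
have d0 : (0 < size (bs r))%N.
  by rewrite lt0n -(onb_size Hb) dimv_eq0 E_nz.
pose Mx : 'M[C]_(size (bs r)) := \matrix_(i, j) hs (bs r)`_j (T (bs r)`_i).
have : size (char_poly Mx) != 1%N by rewrite size_char_poly; move: d0; case: (size (bs r)).
case/closed_rootP => a; rewrite -eigenvalue_root_char => /eigenvalueP [v Hv v0].
pose X0 := \sum_(i < size (bs r)) v 0 i *: (bs r)`_i.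
have X0r : X0 \in E r.
  by apply: memv_suml => i _; apply: memvZ; apply: onb_nth.
have X0c (j : 'I_(size (bs r))) : hs (bs r)`_j X0 = v 0 j by rewrite (hs_nth_sum Hb (fun i => v 0 i)).
have X0nz : X0 != 0.
  apply/eqP => X00; move/eqP: v0; apply; apply/matrixP => i j.
  by rewrite (ord1 i) mxE -X0c X00 hs0r.
have Tb (i : 'I_(size (bs r))) : T (bs r)`_i = \sum_(j < size (bs r)) Mx i j *: (bs r)`_j.
  rewrite -(Proj_id Hb (Schur2 (onb_nth Hb (ltn_ord i)))) Proj_nth.
  by apply: eq_bigr => j _; rewrite mxE.
have TX0 : T X0 = a *: X0.
  rewrite /X0 lin_sum //; under eq_bigr => i _ do rewrite lin_scale // Tb scaler_sumr.
  rewrite exchange_big scaler_sumr /=; apply: eq_bigr => j _.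
  rewrite scalerA; under eq_bigr => i _ do rewrite scalerA.
  rewrite -scaler_suml; congr (_ *: _).
  have := congr1 (fun m : 'rV[C]_(size (bs r)) => m 0 j) Hv; rewrite !mxE => <-.
  by apply: eq_bigr => i _.
pose g X := T X - a *: X.
have hg : linear g.
  move=> c X Y; rewrite /g hT scalerDr scalerBr !scalerA [a * c]mulrC.
  by rewrite opprD addrACA.
have geq h X : g (conj_act (rho h) X) = conj_act (rho h) (g X).
  by rewrite /g Teq (lin_sub (conj_act_lin _)) (lin_scale (conj_act_lin _)).
pose hh := linfun (linpack hg).
pose K := (E r :&: lker hh)%VS.
have memK Y : (Y \in K) = (Y \in E r) && (g Y == 0).
  by rewrite memv_cap memv_ker lfunE.
have invK : G_invariant rho K.
  move=> h Y; rewrite !memK => /andP[Yr /eqP gY].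
  by rewrite E_inv // geq gY conj_act0 eqxx.
have [_ _ irr] := E_irr r.
exists a.
case: (irr K (capvSl _ _) invK) => HK.
  have : X0 \in K by rewrite memK X0r /g TX0 subrr eqxx.
  by rewrite HK memv0 (negbTE X0nz).
move=> X Xr; have := Xr; rewrite -HK memK => /andP[_].
by rewrite subr_eq0 => /eqP.
Qed.

Lemma PiT r a X : (forall Y, Y \in E r -> T Y = a *: Y) -> Pi r (T X) = a *: Pi r X.
Proof.
move=> Ha; rewrite {1}(decomp X) lin_sum // Pi_sum (bigD1 r) //=.
rewrite Ha ?Pi_in // Pi_id ?memvZ ?Pi_in // big1 ?addr0 // => s sr.
by rewrite (@Pi_zero r s) 1?eq_sym // Schur2 // Pi_in.
Qed.

Lemma superdot_T r a : (forall Y, Y \in E r -> T Y = a *: Y) ->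
  superdot (Proj (bs r)) T = a * (\dim (E r))%:R.
Proof.
move=> Ha; rewrite /superdot -trace_Pi mulr_sumr; apply: eq_bigr => i _.
rewrite mulr_sumr; apply: eq_bigr => j _.
by rewrite -Proj_sa (PiT _ Ha) hs_scaler.
Qed.

End SchurT.

Section Main.
Variables (P : M) (K : nat).
Hypotheses (P_herm : adjM P = P) (P_idem : P *m P = P) (P_rank : \rank P = K).

Lemma trP : \tr P = K%:R.
Proof.
have aux m (A : 'M[C]_(n, m)) (B : 'M[C]_(m, n)) : row_full A -> row_free B ->
    (A *m B) *m (A *m B) = A *m B -> B *m A = 1%:M.
  move=> hA hB H; apply: (row_full_inj hA); apply: (row_free_inj hB).
  by rewrite mulmx1 mulmxA -(mulmxA (A *m B)) H.
have hb := mulmx_base P.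
rewrite -P_rank -mxtrace1 -{1}hb mxtrace_mulC; congr (\tr _).
by apply: aux; [exact: col_base_full | exact: row_base_free | rewrite hb].
Qed.

Lemma hsPP : hs P P = K%:R.
Proof. by rewrite /hs P_herm P_idem trP. Qed.

Lemma A_eq xi : Aform (bs xi) P P = hs (Pi xi P) (Pi xi P).
Proof.
have e : Pi xi P = Pi xi (Pi xi P) by rewrite PiPi eqxx.
by rewrite /Aform {1}e Proj_sa.
Qed.

Lemma hsPF F : hs P F = hs P (P *m F *m P).
Proof.
rewrite /hs P_herm !mulmxA P_idem [RHS]mxtrace_mulC mulmxA P_idem.
by [].
Qed.

Lemma B_term F : hs P (adjM F *m P *m F) = hs (P *m F *m P) (P *m F *m P).
Proof.
have PPX (X : M) : P *m (P *m X) = P *m X by rewrite mulmxA P_idem.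
rewrite /hs !adjM_mul P_herm -!mulmxA PPX.
have -> : P *m (adjM F *m (P *m (F *m P))) = (P *m adjM F *m P *m F) *m P.
  by rewrite !mulmxA.
by rewrite [RHS]mxtrace_mulC !mulmxA P_idem.
Qed.

Lemma B_eq xi : Bform (bs xi) P P = \sum_(F <- bs xi) hs (P *m F *m P) (P *m F *m P).
Proof. by rewrite /Bform /Twirl hs_sumr; apply: eq_bigr => F _; rewrite B_term. Qed.

Lemma sumA : \sum_r Aform (bs r) P P = K%:R.
Proof. by rewrite /Aform -hs_sumr -decomp hsPP. Qed.

Lemma delta_entry i j :
  (P *m delta_mx i j *m P) i j = P i i * P j j.
Proof.
rewrite mxE (bigD1 j) //= big1 ?addr0.
  rewrite mxE (bigD1 i) //= big1 ?addr0; first by rewrite mxE !eqxx mulr1.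
  by move=> l li; rewrite mxE (negbTE li) mulr0.
move=> k kj; rewrite mxE big1 ?mul0r // => l _.
by rewrite mxE (negbTE kj) andbF mulr0.
Qed.

Lemma sumB : \sum_r Bform (bs r) P P = (K ^ 2)%:R.
Proof.
have hL : linear (fun X => P *m X *m P).
  by move=> a X Y; rewrite mulmxDr mulmxDl -scalemxAr -scalemxAl.
have -> : \sum_r Bform (bs r) P P = \sum_r \sum_(F <- bs r) hs F (P *m F *m P).
  apply: eq_bigr => r _; rewrite /Bform /Twirl hs_sumr; apply: eq_bigr => F _.
  rewrite /hs P_herm mxtrace_mulC -!mulmxA; congr (\tr _).
rewrite (trace_indep hL).
under eq_bigr => i _ do under eq_bigr => j _ do rewrite hs_delta delta_entry.
rewrite natrX -trP expr2 mulr_suml; apply: eq_bigr => i _.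
by rewrite mulr_sumr.
Qed.

Lemma A_le xi : Aform (bs xi) P P <= K%:R * Bform (bs xi) P P.
Proof.
rewrite B_eq mulr_sumr /Aform /Proj hs_sumr; apply: ler_sum => F _.
rewrite hs_scaler -hsPP [hs P F]hsPF [hs F P]hs_conj hsPF mulrC.
exact: CS.
Qed.

Lemma A_detect xi :
  (forall F, F \in bs xi -> exists c, P *m F *m P = c *: P) ->
  Aform (bs xi) P P = K%:R * Bform (bs xi) P P.
Proof.
move=> Hc; rewrite B_eq mulr_sumr /Aform /Proj hs_sumr; apply: eq_big_seq => F Fb.
have [c Hc'] := Hc F Fb.
rewrite hs_scaler [hs F P]hs_conj hsPF Hc' hs_scalel !hs_scaler hsPP.
rewrite rmorphM /= conjC_nat; ring.
Qed.

Lemma MacW_eq xi :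
  Bform (bs xi) P P = \sum_r MacW E bs xi r * Aform (bs r) P P.
Proof.
have hT := Twirl_lin (bs xi).
have Teq := Twirl_equiv_rho xi.
rewrite /Bform (decomp (Twirl (bs xi) P)) hs_sumr; apply: eq_bigr => r _.
have [a Ha] := Schur3 hT Teq r.
rewrite (PiT hT Teq _ Ha) hs_scaler /MacW (superdot_T hT Teq Ha) /Aform.
congr (_ * _); rewrite mulrCA mulVf ?mulr1 //.
by rewrite pnatr_eq0 dimv_eq0 E_nz.
Qed.

End Main.

End Schur.

End Decomp.

End Gen.

Lemma re_real (R : realType) (z : R[i]) : Num.conj z = z -> real_complex R (@complex.Re R z) = z.
Proof.
case: z => a b /= h; have := congr1 (@complex.Im R) h => /= hb.
have b0 : b = 0 by lra.
by rewrite b0.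
Qed.

Lemma ler_C (R : realType) (x y : R) : real_complex R x <= real_complex R y -> x <= y.
Proof. by rewrite lecE /= => /andP[]. Qed.

Unset Implicit Arguments.

Theorem mainTheorem7
  (R : realType) (G : groupType) (n : nat) (rho : G -> 'M[R[i]]_n)
  (rho_mul : forall g h : G, rho (g * h)%g = rho g *m rho h)
  (rho_one : rho 1%g = 1%:M)
  (rho_unitary : forall g : G, adjM (rho g) *m rho g = 1%:M)
  (I : finType) (E : I -> {vspace 'M[R[i]]_n})
  (E_span : (\sum_(xi : I) E xi)%VS = fullv)
  (E_orth : forall xi r : I, xi != r -> forall X Y : 'M[R[i]]_n,
      X \in E xi -> Y \in E r -> hs X Y = 0)
  (E_irr : forall xi : I, G_irreducible rho (E xi))
  (E_noniso : forall xi r : I, xi != r -> ~ G_isomorphic rho (E xi) (E r))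
  (bs : I -> seq 'M[R[i]]_n)
  (bs_onb : forall xi : I, orthonormal_basis (E xi) (bs xi))
  (K : nat) (P : 'M[R[i]]_n)
  (P_herm : adjM P = P) (P_idem : P *m P = P) (P_rank : \rank P = K)
  (S : {set I})
  (P_detects : forall xi : I, xi \in S -> forall X : 'M[R[i]]_n, X \in E xi ->
      exists c : R[i], P *m X *m P = c *: P) :
  exists A B : I -> R,
    (forall xi, real_complex R (A xi) = Aform (bs xi) P P) /\
    (forall xi, real_complex R (B xi) = Bform (bs xi) P P) /\
    (forall xi, 0 <= A xi) /\
    (forall xi, A xi <= K%:R * B xi) /\
    (\sum_(xi : I) A xi = K%:R) /\
    (\sum_(xi : I) B xi = (K ^ 2)%:R) /\
    (forall xi, real_complex R (B xi) =
                \sum_(r : I) MacW E bs xi r * real_complex R (A r)) /\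
    (forall xi, xi \in S -> A xi = K%:R * B xi).
Proof.
have Aeq xi := A_eq E_orth bs_onb P xi.
have rA xi : real_complex R (@complex.Re R (Aform (bs xi) P P)) = Aform (bs xi) P P.
  by apply: re_real; rewrite Aeq hs_real.
have rB xi : real_complex R (@complex.Re R (Bform (bs xi) P P)) = Bform (bs xi) P P.
  apply: re_real; rewrite (B_eq bs P_herm P_idem) rmorph_sum /=.
  by apply: eq_bigr => F _; rewrite hs_real.
exists (fun xi => @complex.Re R (Aform (bs xi) P P)),
       (fun xi => @complex.Re R (Bform (bs xi) P P)); cbv beta.
split; first exact: rA.
split; first exact: rB.
split.
  move=> xi; apply: ler_C; rewrite rmorph0 rA Aeq; exact: hs_ge0.
split.
  move=> xi; apply: ler_C; rewrite rmorphM /= rmorph_nat rA rB.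
  exact: (A_le bs P_herm P_idem P_rank).
split.
  apply: complexI; rewrite rmorph_sum /= rmorph_nat.
  under eq_bigr => xi _ do rewrite rA.
  exact: (sumA E_span E_orth bs_onb P_herm P_idem P_rank).
split.
  apply: complexI; rewrite rmorph_sum /= rmorph_nat.
  under eq_bigr => xi _ do rewrite rB.
  exact: (sumB E_span E_orth bs_onb P_herm P_idem P_rank).
split.
  move=> xi; rewrite rB; under eq_bigr => r _ do rewrite rA.
  exact: (MacW_eq E_span E_orth bs_onb rho_mul rho_one rho_unitary E_irr E_noniso).
move=> xi Sxi; apply: complexI; rewrite rmorphM /= rmorph_nat rA rB.
apply: (A_detect P_herm P_idem P_rank) => F Fb.
exact: (P_detects xi Sxi F (onb_mem (bs_onb xi) Fb)).
Qed.
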